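(* Let $B$ be a skew-symmetrizable matrix and let $A$ and $A'$ be two admissible quasi-Cartan companions of $B$. Then $A'$ can be obtained from $A$ by a sequence of sign changes at vertices (i.e. simultaneous multiplication of the $k$-th row and $k$-th column by $-1$). In particular, $A$ and $A'$ are equivalent.
   Context: An $n\times n$ integer matrix $B$ is skew-symmetrizable if $DB$ is skew-symmetric for some diagonal matrix $D$ with positive diagonal entries. Its diagram $\Gamma(B)$ is the directed graph on vertices $1,\dots,n$ with an edge $i\to j$ iff $B_{ij}>0$, this edge carrying weight $|B_{ij}B_{ji}|$. A cycle in a diagram is an induced subgraph on $r\ge 3$ vertices whose vertices can be labeled $1,\dots,r$ so that $i,j$ are adjacent iff $|i-j|=1$ or $\{i,j\}=\{1,r\}$; it is oriented if its edges form a directed cycle, non-oriented otherwise. A quasi-Cartan matrix is an integer matrix $A$ with all diagonal entries $2$ such that $DA$ is symmetric for some diagonal $D$ with positive diagonal entries (a symmetrizer). A quasi-Cartan companion of $B$ is a quasi-Cartan matrix $A$ with $|A_{ij}|=|B_{ij}|$ for all $i\ne j$. It is admissible if for every cycle $Z$ in $\Gamma(B)$ the product $\prod_{\{i,j\}\in Z}(-A_{ij})$ over the edges of $Z$ is negative when $Z$ is oriented and positive when $Z$ is non-oriented. The sign change at $k$ replaces $A$ by the matrix obtained by multiplying its $k$-th row and $k$-th column by $-1$. Two quasi-Cartan matrices $A,A'$ are equivalent if they have a common symmetrizer $D$ and $DA'=E^T(DA)E$ for some integer matrix $E$ with $\det E=\pm1$. *)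

(* Defs.v *)
From HB Require Import structures.
From mathcomp Require Import all_boot all_order all_algebra.
Set Implicit Arguments. Unset Strict Implicit. Unset Printing Implicit Defensive.
Import Order.TTheory GRing.Theory Num.Theory.
Local Open Scope ring_scope.

(* Diagonal matrices with positive diagonal entries are given by their
   diagonal d : 'I_n -> rat. *)

Definition skew_symmetrizable n (B : 'M[int]_n) : Prop :=
  exists d : 'I_n -> rat, (forall i, 0 < d i) /\
    forall i j, d i * (B i j)%:~R = - (d j * (B j i)%:~R).

Definition is_symmetrizer n (A : 'M[int]_n) (d : 'I_n -> rat) : Prop :=
  (forall i, 0 < d i) /\ forall i j, d i * (A i j)%:~R = d j * (A j i)%:~R.

Definition quasi_Cartan n (A : 'M[int]_n) : Prop :=
  (forall i, A i i = 2) /\ exists d, is_symmetrizer A d.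

Definition quasi_Cartan_companion n (B A : 'M[int]_n) : Prop :=
  quasi_Cartan A /\ forall i j, i != j -> `|A i j| = `|B i j|.

Definition diag_edge n (B : 'M[int]_n) (i j : 'I_n) : bool := 0 < B i j.
Definition diag_adj n (B : 'M[int]_n) (i j : 'I_n) : bool :=
  diag_edge B i j || diag_edge B j i.

(* Labels 0..r-1 (the paper's 1..r shifted); a, b adjacent in the cycle
   iff |a - b| = 1 or {a, b} = {0, r-1}. *)
Definition cyc_adj (r a b : nat) : bool :=
  [|| (a.+1 == b)%N, (b.+1 == a)%N,
      ((a == 0)%N && (b == r.-1)%N) | ((b == 0)%N && (a == r.-1)%N)].

Definition is_cycle n (B : 'M[int]_n) (r : nat) (f : nat -> 'I_n) : Prop :=
  (3 <= r)%N /\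
  (forall a b, (a < r)%N -> (b < r)%N -> f a = f b -> a = b) /\
  (forall a b, (a < r)%N -> (b < r)%N ->
     diag_adj B (f a) (f b) = cyc_adj r a b).

Definition cycle_oriented n (B : 'M[int]_n) (r : nat) (f : nat -> 'I_n) : Prop :=
  (forall a, (a < r)%N -> diag_edge B (f a) (f ((a.+1) %% r)%N)) \/
  (forall a, (a < r)%N -> diag_edge B (f ((a.+1) %% r)%N) (f a)).

Definition cycle_product n (A : 'M[int]_n) (r : nat) (f : nat -> 'I_n) : int :=
  \prod_(0 <= a < r) (- A (f a) (f ((a.+1) %% r)%N)).

Definition admissible_companion n (B A : 'M[int]_n) : Prop :=
  quasi_Cartan_companion B A /\
  forall r f, is_cycle B r f ->
    (cycle_oriented B r f -> cycle_product A r f < 0) /\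
    (~ cycle_oriented B r f -> 0 < cycle_product A r f).

Definition sign_change n (k : 'I_n) (A : 'M[int]_n) : 'M[int]_n :=
  \matrix_(i, j) ((-1) ^+ (i == k) * (-1) ^+ (j == k) * A i j).

Definition sign_changes n (ks : seq 'I_n) (A : 'M[int]_n) : 'M[int]_n :=
  foldl (fun M k => sign_change k M) A ks.

Definition intmx_to_rat n (M : 'M[int]_n) : 'M[rat]_n := map_mx (fun x => x%:~R) M.

Definition qC_equivalent n (A A' : 'M[int]_n) : Prop :=
  exists d : 'I_n -> rat, is_symmetrizer A d /\ is_symmetrizer A' d /\
  exists E : 'M[int]_n, (\det E = 1 \/ \det E = -1) /\
    diag_mx (\row_i d i) *m intmx_to_rat A' =
    (intmx_to_rat E)^T *m (diag_mx (\row_i d i) *m intmx_to_rat A) *m intmx_to_rat E.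

(* Main.v *)
Require Import Defs.
From HB Require Import structures.
From mathcomp Require Import all_boot all_order all_algebra.
From Stdlib Require Import Classical Lia.
Import Order.TTheory GRing.Theory Num.Theory.
Local Open Scope ring_scope.
Ltac tolia := repeat match goal with
 | H : is_true (~~ (leq _ _)) |- _ => rewrite -ltnNge in H
 | H : is_true (leq _ _) |- _ => apply (elimT ssrnat.leP) in H
 | |- is_true (leq _ _) => apply/ssrnat.leP
 | |- is_true (~~ (leq _ _)) => rewrite -ltnNge
 end; change addn with Nat.add in *; change subn with Nat.sub in *; lia.

Definition wP {T : Type} (sg : T -> T -> int) (h : nat -> T) (a b : nat) : int :=
  \prod_(a <= k < b) sg (h k) (h k.+1).

Lemma wP_cat T sg (h : nat -> T) a m b : (a <= m)%N -> (m <= b)%N ->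
  wP sg h a b = wP sg h a m * wP sg h m b.
Proof. by move=> h1 h2; rewrite /wP (@big_cat_nat _ _ _ m). Qed.

Lemma wP1 T sg (h : nat -> T) a : wP sg h a a.+1 = sg (h a) (h a.+1).
Proof. by rewrite /wP big_nat1. Qed.

Lemma wP_ext T sg (g h : nat -> T) a b c :
  (forall k, (a <= k < b)%N -> sg (g k) (g k.+1) = sg (h (k + c)%N) (h (k + c).+1)) ->
  wP sg g a b = wP sg h (a + c) (b + c).
Proof.
move=> H; rewrite /wP big_addn addnK; exact: eq_big_nat.
Qed.

Lemma wP_eq T sg (g h : nat -> T) a b :
  (forall k, (a <= k < b)%N -> sg (g k) (g k.+1) = sg (h k) (h k.+1)) ->
  wP sg g a b = wP sg h a b.
Proof. move=> H; exact: eq_big_nat. Qed.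

Lemma closed_walk (T : eqType) (R : rel T) (sg : T -> T -> int)
 (Rsym : forall x y, R x y -> R y x)
 (sxx : forall x, sg x x = 1)
 (ssq : forall x y, R x y -> sg x y * sg y x = 1)
 (Good : forall s h, (3 <= s)%N -> h s = h 0%N ->
    (forall k, (k < s)%N -> R (h k) (h k.+1)) ->
    (forall k, (k < s)%N -> h k != h k.+1) ->
    (forall a b, (a.+2 <= b)%N -> (b + 2 <= s + a)%N -> (b < s)%N -> ~~ R (h a) (h b)) ->
    wP sg h 0 s = 1) :
 forall s h, h s = h 0%N -> (forall k, (k < s)%N -> R (h k) (h k.+1)) -> wP sg h 0 s = 1.
Proof.
elim/ltn_ind => s IH h hs hw.
case: (classic (exists a, (a < s)%N /\ h a = h a.+1)) => [[a [ha he]]|nc].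
  pose h' k := if (k < a)%N then h k else h k.+1.
  have -> : wP sg h 0 s = wP sg h' 0 s.-1.
    rewrite (wP_cat _ _ _ _ a); try by tolia.
    rewrite (wP_cat _ _ _ a a.+1); try by tolia.
    rewrite wP1 -he sxx mul1r.
    rewrite (wP_cat _ _ h' 0 a s.-1); try by tolia.
    congr (_ * _).
      symmetry; apply: wP_eq => k /andP [_ hk].
      rewrite /h' hk; case: ltnP => hk1 //.
      have -> : k.+1 = a by tolia.
      by rewrite he.
    have -> : wP sg h a.+1 s = wP sg h (a + 1) (s.-1 + 1).
      by congr wP; tolia.
    symmetry; apply: wP_ext => k /andP [hk _].
    rewrite /h' ltnNge hk /= ltnNge (leqW hk) /= !addn1 //.
  apply: IH; first by tolia.
    rewrite /h'; case: ltnP => h1; first by tolia.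
    rewrite prednK; last by tolia.
    rewrite hs; case: ltnP => h2 //.
    have a0 : a = 0%N by tolia.
    by rewrite a0 in he.
  move=> k hk; rewrite /h'.
  case: (ltnP k a) => h1; case: (ltnP k.+1 a) => h2.
  - apply: hw; tolia.
  - have ea : k.+1 = a by tolia.
    by rewrite -ea in he; rewrite -he; apply: hw; tolia.
  - tolia.
  - apply: hw; tolia.
case: (classic (exists a b, (a.+2 <= b)%N /\ (b + 2 <= s + a)%N /\ (b < s)%N /\ R (h a) (h b)))
  => [[a [b [hab [hb1 [hb2 hR]]]]]|nb].
  have [d ed] : exists d, d = (b - a)%N by eexists.
  pose h1 k := if (k <= d)%N then h (k + a)%N else h a.
  pose h2 k := if (k <= a)%N then h k else h (k + (d - 1))%N.
  have E1 : wP sg h1 0 d.+1 = wP sg h a b * sg (h b) (h a).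
    rewrite (wP_cat _ _ h1 0 d); try by tolia.
    rewrite wP1 /h1 leqnn ltnn.
    have -> : (d + a = b)%N by tolia.
    congr (_ * _).
    have -> : wP sg h a b = wP sg h (0 + a) (d + a) by congr wP; tolia.
    apply: wP_ext => k /andP [_ hk].
    by rewrite /h1 ltnW // hk addSn.
  have E2 : wP sg h2 0 (s - d).+1 = wP sg h 0 a * sg (h a) (h b) * wP sg h b s.
    rewrite (wP_cat _ _ h2 0 a); try by tolia.
    rewrite (wP_cat _ _ h2 a a.+1); try by tolia.
    rewrite wP1 mulrA; congr (_ * _ * _).
    - apply: wP_eq => k /andP [_ hk].
      by rewrite /h2 ltnW // hk.
    - rewrite /h2 leqnn ltnn; congr (sg _ (h _)); tolia.
    - have -> : wP sg h b s = wP sg h (a.+1 + (d - 1)) ((s - d).+1 + (d - 1)).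
        by congr wP; tolia.
      apply: wP_ext => k /andP [hk _].
      rewrite /h2 leqNgt hk /= leqNgt ltnS ltnW //=.
  have W1 : wP sg h1 0 d.+1 = 1.
    apply: IH; first by tolia.
      by rewrite /h1 ltnn leq0n add0n.
    move=> k hk; rewrite /h1; case: (ltnP k d) => hkd.
      rewrite (ltnW hkd) addSn; apply: hw; tolia.
    have -> : k = d by tolia.
    rewrite leqnn ?ltnn; have -> : (d + a = b)%N by tolia.
    exact: Rsym.
  have W2 : wP sg h2 0 (s - d).+1 = 1.
    apply: IH; first by tolia.
      rewrite /h2 leq0n; case: leqP => h3; last by exfalso; tolia.
      by rewrite -hs; congr h; tolia.
    move=> k hk; rewrite /h2; case: (ltnP k a) => hka.
      rewrite (ltnW hka); apply: hw; tolia.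
    case: (ltnP a k) => hak.
      have -> : (k.+1 + (d - 1) = (k + (d - 1)).+1)%N by tolia.
      apply: hw; tolia.
    have ek : k = a by tolia.
    rewrite ?ek ?leqnn ?ltnn /=.
    have -> : (a.+1 + (d - 1) = b)%N by tolia.
    exact: hR.
  have : wP sg h1 0 d.+1 * wP sg h2 0 (s - d).+1 =
         wP sg h 0 s * (sg (h b) (h a) * sg (h a) (h b)).
    rewrite E1 E2 (wP_cat _ _ h 0 a s); try by tolia.
    rewrite (wP_cat _ _ h a b s); try by tolia.
    set X := wP sg h a b; set Y := sg (h b) (h a); set Z := wP sg h 0 a;
    set U := sg (h a) (h b); set V := wP sg h b s.
    rewrite -!mulrA [RHS]mulrCA; congr (_ * _).
    rewrite [LHS]mulrCA; congr (_ * _).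
    by rewrite [RHS]mulrC [LHS]mulrA.
  by rewrite W1 W2 (ssq _ _ (Rsym _ _ hR)) !mulr1 => <-.
case: (leqP s 2) => hs2.
  case: s IH hs hw nc nb hs2 => [|[|[|]]] // IH hs hw nc nb _.
  - by rewrite /wP big_geq.
  - by exfalso; apply: nc; exists 0%N; split.
  - rewrite /wP big_nat_recr //= big_nat1 hs; apply: ssq; exact: hw.
apply: Good => //.
  move=> k hk; apply/eqP => e; apply: nc; by exists k.
move=> a b h1 h2 h3; apply/negP => hR; apply: nb; by exists a, b.
Qed.

Set Implicit Arguments.

Lemma skew_sgz n (B : 'M[int]_n) : skew_symmetrizable B ->
  forall i j, sgz (B i j) = - sgz (B j i).
Proof.
case=> d [dp H] i j; have := congr1 (@sgz _) (H i j).
by rewrite sgzN !sgzM (gtr0_sgz (dp i)) (gtr0_sgz (dp j)) !mul1r !sgz_int.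
Qed.

Lemma sym_sgz n (A : 'M[int]_n) d : is_symmetrizer A d ->
  forall i j, sgz (A i j) = sgz (A j i).
Proof.
case=> dp H i j; have := congr1 (@sgz _) (H i j).
by rewrite !sgzM (gtr0_sgz (dp i)) (gtr0_sgz (dp j)) !mul1r !sgz_int.
Qed.

Lemma adjE n (B : 'M[int]_n) : skew_symmetrizable B ->
  forall i j, diag_adj B i j = (B i j != 0).
Proof.
move=> sB i j; rewrite /diag_adj /diag_edge.
by rewrite -[(0 < B j i)]sgz_gt0 (skew_sgz sB j i) oppr_gt0 sgz_lt0 neq_lt orbC.
Qed.

Lemma adj_sym n (B : 'M[int]_n) i j : diag_adj B i j = diag_adj B j i.
Proof. by rewrite /diag_adj orbC. Qed.

Lemma adj_irr n (B : 'M[int]_n) : skew_symmetrizable B -> forall i, diag_adj B i i = false.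
Proof.
move=> sB i; rewrite adjE //; apply/negbTE; rewrite negbK.
rewrite -sgz_eq0; have := skew_sgz sB i i; set x := sgz _ => h.
have : x + x == 0 by rewrite {1}h addNr.
by rewrite -mulr2n mulrn_eq0.
Qed.

Definition sgm n (A A' : 'M[int]_n) (x y : 'I_n) : int := sgz (A x y) * sgz (A' x y).
Definition Rm n (B : 'M[int]_n) (x y : 'I_n) : bool := diag_adj B x y || (x == y).

Lemma sgm_sym n (B A A' : 'M[int]_n) : admissible_companion B A -> admissible_companion B A' ->
  forall x y, sgm A A' x y = sgm A A' y x.
Proof.
move=> [[[_ [d hd]] _] _] [[[_ [d' hd']] _] _] x y.
by rewrite /sgm (sym_sgz hd x y) (sym_sgz hd' x y).
Qed.

Lemma sgm_xx n (B A A' : 'M[int]_n) : admissible_companion B A -> admissible_companion B A' ->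
  forall x, sgm A A' x x = 1.
Proof.
move=> [[[h2 _] _] _] [[[h2' _] _] _] x.
by rewrite /sgm h2 h2'.
Qed.

Lemma adj_nz n (B A : 'M[int]_n) : skew_symmetrizable B -> admissible_companion B A ->
  forall x y, diag_adj B x y -> A x y != 0.
Proof.
move=> sB [[_ hA] _] x y hxy.
have nxy : x != y by apply: contraTneq hxy => ->; rewrite adj_irr.
by rewrite -normr_eq0 hA // normr_eq0 -adjE.
Qed.

Lemma sgm_sq n (B A A' : 'M[int]_n) : skew_symmetrizable B ->
  admissible_companion B A -> admissible_companion B A' ->
  forall x y, Rm B x y -> sgm A A' x y * sgm A A' y x = 1.
Proof.
move=> sB hA hA' x y /orP [hxy|/eqP ->]; last by rewrite (sgm_xx hA hA') mulr1.
rewrite -(sgm_sym hA hA') /sgm mulrACA !mulz_sg.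
have hyx : diag_adj B y x by rewrite adj_sym.
by rewrite (adj_nz sB hA _ _ hyx) (adj_nz sB hA' _ _ hyx).
Qed.

Lemma cyc_adj_sym r a b : cyc_adj r a b = cyc_adj r b a.
Proof.
rewrite /cyc_adj.
by case: (a.+1 == b)%N; case: (b.+1 == a)%N; case: (a == 0)%N; case: (b == 0)%N;
   case: (a == r.-1)%N; case: (b == r.-1)%N.
Qed.

Lemma is_cycle_of n (B : 'M[int]_n) (s : nat) (h : nat -> 'I_n) :
  skew_symmetrizable B ->
  (3 <= s)%N -> h s = h 0%N ->
  (forall k, (k < s)%N -> Rm B (h k) (h k.+1)) ->
  (forall k, (k < s)%N -> h k != h k.+1) ->
  (forall a b, (a.+2 <= b)%N -> (b + 2 <= s + a)%N -> (b < s)%N -> ~~ Rm B (h a) (h b)) ->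
  is_cycle B s h.
Proof.
move=> sB s3 hs hw nc nb.
have adjw : forall k, (k < s)%N -> diag_adj B (h k) (h k.+1).
  move=> k hk; have := hw k hk; rewrite /Rm; case/orP => // e.
  by have := nc k hk; rewrite e.
have key : forall a b, (a < b)%N -> (b < s)%N ->
   [/\ h a != h b & diag_adj B (h a) (h b) = cyc_adj s a b].
  move=> a b hab hb.
  case: (boolP ((a.+2 <= b) && (b + 2 <= s + a))%N) => [/andP [h1 h2]|hn].
    have := nb a b h1 h2 hb; rewrite /Rm negb_or => /andP [na ne]; split => //.
    rewrite (negbTE na); apply/esym/negbTE.
    rewrite /cyc_adj; apply/negP => /or4P [/eqP e|/eqP e|/andP [/eqP e1 /eqP e2]|/andP [/eqP e1 /eqP e2]]; tolia.
  have : (b = a.+1) \/ (a = 0%N /\ b = s.-1) by move: hn; rewrite negb_and => /orP [hn|hn]; tolia.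
  case=> [eb|[ea eb]].
    subst b; split; first by apply: nc; tolia.
    by rewrite adjw ?/cyc_adj ?eqxx //; tolia.
  subst a b.
  have e1 : (s.-1).+1 = s by tolia.
  split.
    by have := nc s.-1 (ltac:(tolia)); rewrite e1 hs eq_sym.
  rewrite adj_sym; have := adjw s.-1 (ltac:(tolia)); rewrite e1 hs => ->.
  by rewrite /cyc_adj eqxx eqxx !orbT.
split => //; split.
  move=> a b ha hb e; case: (ltngtP a b) => hab //.
  - by have [/eqP] := key a b hab hb.
  - by have [ne _] := key b a hab ha; move: ne; rewrite e eqxx.
move=> a b ha hb; case: (ltngtP a b) => hab.
- by have [] := key a b hab hb.
- by rewrite adj_sym cyc_adj_sym; have [] := key b a hab ha.
- subst b; rewrite adj_irr //; apply/esym/negbTE; rewrite /cyc_adj.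
  apply/negP => /or4P [/eqP e|/eqP e|/andP [/eqP e1 /eqP e2]|/andP [/eqP e1 /eqP e2]]; tolia.
Qed.

Lemma cp_eq n (A : 'M[int]_n) s (h : nat -> 'I_n) : h s = h 0%N ->
  cycle_product A s h = \prod_(0 <= a < s) (- A (h a) (h a.+1)).
Proof.
move=> hs; rewrite /cycle_product; apply: eq_big_nat => a /andP [_ ha].
case: (ltnP a.+1 s) => h1; first by rewrite modn_small.
have e : a.+1 = s by tolia.
by rewrite e modnn hs.
Qed.

Lemma sgz_prod (I : Type) (r : seq I) (F : I -> int) :
  sgz (\prod_(i <- r) F i) = \prod_(i <- r) sgz (F i).
Proof. exact: (big_morph _ (@sgzM _) (sgz1 _)). Qed.

Lemma sgz_cp n (A A' : 'M[int]_n) s (h : nat -> 'I_n) : h s = h 0%N ->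
  sgz (cycle_product A s h) * sgz (cycle_product A' s h) = wP (sgm A A') h 0 s.
Proof.
move=> hs; rewrite !cp_eq // !sgz_prod -big_split /=.
by apply: eq_bigr => a _; rewrite !sgzN mulrNN.
Qed.

Lemma good_case n (B A A' : 'M[int]_n) : skew_symmetrizable B ->
  admissible_companion B A -> admissible_companion B A' ->
  forall s (h : nat -> 'I_n), (3 <= s)%N -> h s = h 0%N ->
    (forall k, (k < s)%N -> Rm B (h k) (h k.+1)) ->
    (forall k, (k < s)%N -> h k != h k.+1) ->
    (forall a b, (a.+2 <= b)%N -> (b + 2 <= s + a)%N -> (b < s)%N -> ~~ Rm B (h a) (h b)) ->
    wP (sgm A A') h 0 s = 1.
Proof.
move=> sB hA hA' s h s3 hs hw nc nb.
have cyc := @is_cycle_of _ B s h sB s3 hs hw nc nb.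
rewrite -sgz_cp //.
have [o1 n1] := hA.2 s h cyc; have [o2 n2] := hA'.2 s h cyc.
case: (classic (cycle_oriented B s h)) => ho.
  by rewrite (ltr0_sgz (o1 ho)) (ltr0_sgz (o2 ho)) mulrNN mulr1.
by rewrite (gtr0_sgz (n1 ho)) (gtr0_sgz (n2 ho)) mulr1.
Qed.

Lemma all_walks n (B A A' : 'M[int]_n) : skew_symmetrizable B ->
  admissible_companion B A -> admissible_companion B A' ->
  forall s (h : nat -> 'I_n), h s = h 0%N ->
    (forall k, (k < s)%N -> Rm B (h k) (h k.+1)) -> wP (sgm A A') h 0 s = 1.
Proof.
move=> sB hA hA'.
apply: closed_walk.
- move=> x y; rewrite /Rm adj_sym eq_sym; done.
- exact: sgm_xx hA hA'.
- exact: sgm_sq sB hA hA'.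
- exact: good_case sB hA hA'.
Qed.

Lemma int_sg (x : int) : x = sgz x * `|x|.
Proof. by rewrite {1}[x]intEsg abszE. Qed.

Definition root_of n (B : 'M[int]_n) (v : 'I_n) := fingraph.root (diag_adj B) v.

Lemma adj_csym n (B : 'M[int]_n) : connect_sym (diag_adj B).
Proof. by apply: sym_connect_sym => x y; apply: adj_sym. Qed.

Lemma ex_path n (B : 'M[int]_n) v :
  exists p, path (diag_adj B) (root_of B v) p && (last (root_of B v) p == v).
Proof.
have : connect (diag_adj B) (root_of B v) v by rewrite adj_csym connect_root.
by case/connectP => p hp hl; exists p; rewrite hp -hl eqxx.
Qed.

Definition pth n (B : 'M[int]_n) v := xchoose (ex_path B v).
Definition gw n (B : 'M[int]_n) v k := nth (root_of B v) (root_of B v :: pth B v) k.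
Definition eps n (B A A' : 'M[int]_n) v := wP (sgm A A') (gw B v) 0 (size (pth B v)).

Lemma gw_walk n (B : 'M[int]_n) v k : (k < size (pth B v))%N ->
  diag_adj B (gw B v k) (gw B v k.+1).
Proof.
have /andP [hp _] := xchooseP (ex_path B v).
by move: hp => /(pathP (root_of B v)) H hk; apply: H.
Qed.

Lemma gw0 n (B : 'M[int]_n) v : gw B v 0 = root_of B v.
Proof. by []. Qed.

Lemma gwL n (B : 'M[int]_n) v : gw B v (size (pth B v)) = v.
Proof.
have /andP [_ /eqP hl] := xchooseP (ex_path B v).
by rewrite /gw -last_nth.
Qed.

Lemma wP_sq n (B A A' : 'M[int]_n) : skew_symmetrizable B ->
  admissible_companion B A -> admissible_companion B A' ->
  forall (h : nat -> 'I_n) a b, (forall k, (a <= k < b)%N -> Rm B (h k) (h k.+1)) ->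
  wP (sgm A A') h a b * wP (sgm A A') h a b = 1.
Proof.
move=> sB hA hA' h a b H.
rewrite /wP -expr2 -prodrXl big_seq_cond; apply: big1 => k /andP [hk _].
rewrite mem_index_iota in hk.
by rewrite expr2 {2}(sgm_sym hA hA') (sgm_sq sB hA hA') // H.
Qed.

Lemma eps_sq n (B A A' : 'M[int]_n) : skew_symmetrizable B ->
  admissible_companion B A -> admissible_companion B A' ->
  forall v, eps B A A' v * eps B A A' v = 1.
Proof.
move=> sB hA hA' v; apply: (wP_sq sB hA hA') => k /andP [_ hk].
by rewrite /Rm gw_walk.
Qed.

Lemma eps_adj n (B A A' : 'M[int]_n) : skew_symmetrizable B ->
  admissible_companion B A -> admissible_companion B A' ->
  forall u v, diag_adj B u v -> eps B A A' u * sgm A A' u v * eps B A A' v = 1.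
Proof.
move=> sB hA hA' u v huv.
have er : root_of B u = root_of B v.
  by apply/(fingraph.rootP (adj_csym B)); apply: connect1.
set Lu := size (pth B u); set Lv := size (pth B v).
pose hh k := if (k <= Lu)%N then gw B u k else gw B v (Lu + 1 + Lv - k).
have W := all_walks sB hA hA' (Lu + 1 + Lv)%N hh.
rewrite -W.
- rewrite (wP_cat _ _ hh 0 Lu); try by tolia.
  rewrite (wP_cat _ _ hh Lu Lu.+1); try by tolia.
  rewrite wP1 mulrA; congr (_ * _ * _).
  + apply: wP_eq => k /andP [_ hk]; rewrite /hh (ltnW hk) hk //.
  + rewrite /hh leqnn ltnn.
    have -> : (Lu + 1 + Lv - Lu.+1 = Lv)%N by tolia.
    by rewrite gwL /Lu gwL.
  + have -> : wP (sgm A A') hh Lu.+1 (Lu + 1 + Lv) = wP (sgm A A') hh (0 + Lu.+1) (Lv + Lu.+1).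
      by congr wP; tolia.
    rewrite -(wP_ext _ _ (fun j => gw B v (Lv - j)) hh 0 Lv Lu.+1); last first.
      move=> k /andP [_ hk]; rewrite /hh.
      have -> : (k + Lu.+1 <= Lu)%N = false by apply/negbTE; tolia.
      have -> : ((k + Lu.+1).+1 <= Lu)%N = false by apply/negbTE; tolia.
      have -> : (Lu + 1 + Lv - (k + Lu.+1) = Lv - k)%N by tolia.
      have -> : (Lu + 1 + Lv - (k + Lu.+1).+1 = Lv - k.+1)%N by tolia.
      by [].
    rewrite /wP big_nat_rev /=; apply: eq_big_nat => k /andP [_ hk].
    rewrite add0n.
    have -> : (Lv - (Lv - k.+1) = k.+1)%N by tolia.
    have -> : (Lv - (Lv - k.+1).+1 = k)%N by tolia.
    by rewrite (sgm_sym hA hA').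
- rewrite /hh /=.
  have -> : (Lu + 1 + Lv <= Lu)%N = false by apply/negbTE; tolia.
  by rewrite subnn gw0 gw0 er.
- move=> k hk; rewrite /hh.
  case: (ltnP k Lu) => h1.
    by rewrite (ltnW h1) /Rm gw_walk.
  case: (ltnP Lu k) => h2.
    have -> : (Lu + 1 + Lv - k = (Lu + 1 + Lv - k.+1).+1)%N by tolia.
    rewrite /Rm adj_sym gw_walk //; tolia.
  have ek : k = Lu by tolia.
  rewrite ek ?leqnn ?ltnn /=.
  have -> : (Lu + 1 + Lv - Lu.+1 = Lv)%N by tolia.
  by rewrite gwL /Lu gwL /Rm huv.
Qed.

Lemma sign_changesE n (ks : seq 'I_n) (A : 'M[int]_n) i j :
  sign_changes ks A i j = (-1) ^+ (count_mem i ks) * (-1) ^+ (count_mem j ks) * A i j.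
Proof.
elim: ks A => [|k ks IH] A /=; first by rewrite !expr0 !mul1r.
rewrite /sign_changes /= -/(sign_changes ks _) IH /sign_change mxE.
rewrite !exprD ![k == _]eq_sym.
by rewrite [in RHS]mulrACA mulrA; congr (_ * _); exact: mulrC.
Qed.

Unset Implicit Arguments.

Theorem mainTheorem1 (n : nat) (B A A' : 'M[int]_n) :
  skew_symmetrizable B ->
  admissible_companion B A ->
  admissible_companion B A' ->
  (exists ks : seq 'I_n, A' = sign_changes ks A) /\ qC_equivalent A A'.
Proof.
move=> sB hA hA'.
have esq : forall v, eps B A A' v * eps B A A' v = 1 := eps_sq sB hA hA'.
have epm : forall v, eps B A A' v = 1 \/ eps B A A' v = -1.
  move=> v; have := esq v; rewrite -expr2 => /eqP; rewrite sqrf_eq1.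
  by case/orP => /eqP; auto.
have hsg : forall u v, diag_adj B u v -> sgm A A' u v = eps B A A' u * eps B A A' v.
  move=> u v huv; have key := eps_adj sB hA hA' u v huv.
  case: (epm u) => Eu; case: (epm v) => Ev;
    rewrite Eu Ev ?mul1r ?mulr1 ?mulN1r ?mulrN1 ?opprK in key *; 
    by [|rewrite -key opprK].
have hA'E : forall i j, A' i j = eps B A A' i * eps B A A' j * A i j.
  move=> i j; case: (eqVneq i j) => [<-|nij].
    by rewrite hA'.1.1.1 hA.1.1.1 esq mul1r.
  case: (boolP (diag_adj B i j)) => hij.
    rewrite (int_sg (A' i j)) (int_sg (A i j)) hA'.1.2 // -hA.1.2 // -hsg // /sgm.
    by rewrite mulrACA mulz_sg (adj_nz sB hA _ _ hij) mul1r.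
  have hB : B i j = 0 by apply/eqP; move: hij; rewrite adjE // negbK.
  have zA : A i j = 0 by apply/eqP; rewrite -normr_eq0 hA.1.2 // hB normr0.
  have zA' : A' i j = 0 by apply/eqP; rewrite -normr_eq0 hA'.1.2 // hB normr0.
  by rewrite zA zA' mulr0.
split.
  exists [seq k <- enum 'I_n | eps B A A' k == -1].
  apply/matrixP => i j; rewrite sign_changesE hA'E.
  have cnt : forall x, count_mem x [seq k <- enum 'I_n | eps B A A' k == -1] = (eps B A A' x == -1).
    move=> x; rewrite count_uniq_mem; last by rewrite filter_uniq // enum_uniq.
    by rewrite mem_filter mem_enum andbT.
  have ee : forall x, (-1) ^+ (eps B A A' x == -1) = eps B A A' x.
    by move=> y; case: (epm y) => ->.
  by rewrite !cnt !ee.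
have [[[_ [d hd]] _] _] := hA.
exists d; split => //; split.
  split; first exact: hd.1.
  move=> i j; rewrite !hA'E [eps B A A' j * eps B A A' i]mulrC.
  rewrite [(_ * A i j)%:~R]intrM [(_ * A j i)%:~R]intrM.
  by rewrite mulrCA (hd.2 i j) [RHS]mulrCA.
exists (diag_mx (\row_i eps B A A' i)); split.
  rewrite det_diag.
  have : forall i, (\row_i eps B A A' i) 0 i = 1 \/ (\row_i eps B A A' i) 0 i = -1.
    by move=> i; rewrite mxE; apply: epm.
  move=> H; apply: (big_ind (fun x : int => x = 1 \/ x = -1)) => //; first by left.
  move=> x y [->|->] [->|->]; rewrite ?mul1r ?mulr1 ?mulrNN; auto.
have Eq : intmx_to_rat (diag_mx (\row_i eps B A A' i)) = diag_mx (\row_i ((eps B A A' i)%:~R : rat)).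
  apply/matrixP => i j; rewrite !mxE.
  by case: (i == j); rewrite ?mulr1n ?mulr0n.
rewrite Eq tr_diag_mx !mul_diag_mx mul_mx_diag; apply/matrixP => i j; rewrite !mxE.
by rewrite hA'E !intrM mulrCA [RHS]mulrAC.
Qed.
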